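(* Let $k\ge 1$ and let $U$ be a nonempty $k$-unitrade. Then $|U|\ge k+1$, and if $|U|=k+1$ or $|{\rm supp}(U)|=k+1$ then $U$ is equivalent to $W_k$.
   Context: A $k$-unitrade on a finite set $V$ is a set $U$ of $k$-element subsets (blocks) of $V$ such that every $(k-1)$-element subset of $V$ is contained in an even number of blocks of $U$. ${\rm supp}(U)=\bigcup_{u\in U}u$. Two collections $U_1$ of subsets of $V_1$ and $U_2$ of subsets of $V_2$ are equivalent if there is an injection $f:V_1\to V_2$ with $U_2=\{f(u): u\in U_1\}$. $W_k$ denotes the set of all $k$-element subsets of a $(k+1)$-element set. *)

(* Defs.v *)
From mathcomp Require Import all_boot.
Set Implicit Arguments. Unset Strict Implicit. Unset Printing Implicit Defensive.

Definition unitrade (V : finType) (k : nat) (U : {set {set V}}) : Prop :=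
  (forall u, u \in U -> #|u| = k) /\
  (forall S : {set V}, #|S| = k.-1 -> ~~ odd #|[set u in U | S \subset u]|).

Definition supp (V : finType) (U : {set {set V}}) : {set V} :=
  \bigcup_(u in U) u.

Definition W (k : nat) : {set {set 'I_k.+1}} := [set B : {set 'I_k.+1} | #|B| == k].

Definition equivalent (V1 V2 : finType) (U1 : {set {set V1}}) (U2 : {set {set V2}}) : Prop :=
  exists f : V1 -> V2, injective f /\ U2 = [set f @: u | u : {set V1} in U1].

(* Main.v *)
Require Import Defs.
From mathcomp Require Import all_boot zify.
Set Implicit Arguments. Unset Strict Implicit.

Lemma ksubE (T : finType) k (A B : {set T}) :
  #|A| = k.+1 -> B \subset A -> #|B| = k -> exists2 z, z \in A & B = A :\ z.
Proof.
move=> Ak BA Bk.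
have : #|A :\: B| == 1 by rewrite cardsDS // Ak Bk subSnn.
case/cards1P => z hz.
have : z \in A :\: B by rewrite hz set11.
rewrite inE => /andP[_ zA].
exists z => //.
by rewrite -hz setDDr setDv set0U; apply/esym/setIidPr.
Qed.

Lemma ksub_eq (T : finType) k (A : {set T}) (X : {set {set T}}) :
  #|A| = k.+1 -> (forall B, B \in X -> B \subset A /\ #|B| = k) ->
  k.+1 <= #|X| -> X = [set A :\ z | z in A].
Proof.
move=> Ak HX Xk; apply/eqP; rewrite eqEcard; apply/andP; split.
  apply/subsetP => B BX; have [BA Bk] := HX B BX.
  by have [z zA ->] := ksubE Ak BA Bk; apply: imset_f.
by apply: leq_trans (leq_imset_card _ _) _; rewrite Ak.
Qed.

Lemma other (V : finType) k (U : {set {set V}}) (S w0 : {set V}) :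
  unitrade k U -> #|S| = k.-1 -> w0 \in U -> S \subset w0 ->
  exists w, [&& w \in U, w != w0 & S \subset w].
Proof.
move=> [_ Ue] Sk w0U Sw0.
case: (pickP (fun w => [&& w \in U, w != w0 & S \subset w])) => [w hw|none].
  by exists w.
have : [set w in U | S \subset w] = [set w0].
  apply/setP => w; rewrite !inE; have := none w.
  by case: eqP => [->|_]; rewrite ?w0U ?Sw0 //= => ->.
by move=> E; have := Ue S Sk; rewrite E cards1.
Qed.

Lemma final (V : finType) k (U : {set {set V}}) (T : {set V}) :
  #|T| = k.+1 -> (forall v, v \in U -> v \subset T /\ #|v| = k) -> k.+1 <= #|U| ->
  equivalent (W k) U.
Proof.
move=> Tk HU Uk.
pose f := fun i : 'I_k.+1 => (enum_val (cast_ord (esym Tk) i) : V).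
have finj : injective f.
  by move=> i j /enum_val_inj /cast_ord_inj.
exists f; split => //.
rewrite (ksub_eq Tk HU Uk); apply/esym/(ksub_eq Tk).
  move=> B /imsetP [C]; rewrite inE => /eqP Ck ->; split.
    by apply/subsetP => _ /imsetP [i _ ->]; apply: enum_valP.
  by rewrite card_imset.
rewrite card_imset; last exact: imset_inj.
by rewrite /W card_draws card_ord binSn.
Qed.

Theorem proposition9 (V : finType) (k : nat) (U : {set {set V}}) :
  1 <= k -> unitrade k U -> U != set0 ->
  k.+1 <= #|U| /\
  ((#|U| = k.+1 \/ #|supp U| = k.+1) -> equivalent (W k) U).
Proof.
move=> k1 HU U0; have [Uk Ue] := HU.
case/set0Pn: U0 => u uU.
have uk := Uk u uU.
have cD1 : forall (A : {set V}) x, x \in A -> #|A| = k -> #|A :\ x| = k.-1.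
  by move=> A x xA Ak; have := cardsD1 x A; rewrite xA Ak; lia.
have ex : forall x, x \in u -> exists v, [&& v \in U, v != u & u :\ x \subset v].
  by move=> x xu; apply: (other HU (cD1 _ _ xu uk) uU (subsetDl _ _)).
pose g x := odflt u [pick v | [&& v \in U, v != u & u :\ x \subset v]].
have gP : forall x, x \in u -> [&& g x \in U, g x != u & u :\ x \subset g x].
  move=> x xu; rewrite /g; case: pickP => //= none.
  by have [v hv] := ex x xu; move: (none v); rewrite /= hv.
have gnot : forall x, x \in u -> x \notin g x.
  move=> x xu; apply/negP => xg; have /and3P [gU gu sub] := gP x xu.
  have : u \subset g x by rewrite -(setD1K xu) subUset sub1set xg.
  move=> ug; move/negP: gu; apply; rewrite eq_sym eqEcard ug (Uk _ gU) uk /=.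
  done.
have ginj : {in u &, injective g}.
  move=> x y xu yu e; apply/eqP; apply/negPn/negP => ne.
  have /and3P [_ _ sub] := gP y yu.
  have : x \in g y by apply: (subsetP sub); rewrite !inE ne xu.
  by rewrite -e (negbTE (gnot x xu)).
have sub : u |: (g @: u) \subset U.
  rewrite subUset sub1set uU; apply/subsetP => _ /imsetP [x xu ->].
  by case/and3P: (gP x xu).
have cardS : #|u |: (g @: u)| = k.+1.
  rewrite cardsU1 (card_in_imset ginj) uk.
  have -> : u \notin g @: u.
    apply/imsetP => [[x xu e]]; have /and3P [_ gu _] := gP x xu.
    by rewrite -e eqxx in gu.
  by [].
have Ubig : k.+1 <= #|U| by rewrite -cardS; apply: subset_leq_card.
split => // Hc.
suffices [T [Tk TU]] : exists T : {set V}, #|T| = k.+1 /\ forall v, v \in U -> v \subset T.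
  by apply: (final Tk) => // v vU; split; [exact: TU | exact: Uk].
case: Hc => Hc; last first.
  by exists (supp U); split => // v vU; apply: bigcup_sup.
have [x0 x0u] : exists x0, x0 \in u.
  by apply/set0Pn; rewrite -card_gt0 uk.
have /and3P [gx0U gx0u subx0] := gP x0 x0u.
have UE : U = u |: (g @: u).
  by symmetry; apply/eqP; rewrite eqEcard sub Hc cardS ltnSn.
have Ik : u :&: g x0 = u :\ x0.
  apply/eqP; rewrite eqEsubset; apply/andP; split; last by rewrite subsetI subsetDl subx0.
  apply/subsetP => y; rewrite !inE => /andP [yu yg]; rewrite yu andbT.
  by apply/eqP => e; rewrite e in yg; rewrite (negbTE (gnot x0 x0u)) in yg.
have Tk : #|u :|: g x0| = k.+1.
  have := cardsUI u (g x0); rewrite Ik (cD1 _ _ x0u uk) uk (Uk _ gx0U); lia.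
exists (u :|: g x0); split => //.
move=> v; rewrite UE => /setU1P [->|/imsetP [x xu ->]]; first exact: subsetUl.
case: (eqVneq x x0) => [->|nx]; first exact: subsetUr.
have xg0 : x \in g x0 by apply: (subsetP subx0); rewrite !inE nx xu.
have [w /and3P [wU wg0 Sw]] := other HU (cD1 _ _ xg0 (Uk _ gx0U)) gx0U (subsetDl _ _).
have Sgx : g x0 :\ x \subset g x.
  move: wU; rewrite UE => /setU1P [wu|/imsetP [z zu wz]].
    have gs : g x0 \subset u by rewrite -(setD1K xg0) subUset sub1set xu -wu Sw.
    by move: gx0u; rewrite eqEcard gs (Uk _ gx0U) uk leqnn.
  case: (eqVneq z x) => [zx|nzx]; first by move: Sw; rewrite wz zx.
  case: (eqVneq z x0) => [zx0|nzx0]; first by rewrite wz zx0 eqxx in wg0.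
  have zS : z \in g x0 :\ x by rewrite !inE nzx (subsetP subx0) // !inE nzx0 zu.
  by have := subsetP Sw z zS; rewrite wz (negbTE (gnot z zu)).
have /and3P [gxU _ subx] := gP x xu.
have E : g x = (u :|: g x0) :\ x.
  apply/eqP; rewrite eq_sym eqEcard (Uk _ gxU); apply/andP; split.
    by rewrite setDUl subUset subx Sgx.
  have := cardsD1 x (u :|: g x0); rewrite Tk inE xu /= add1n; case=> <-.
  exact: leqnn.
by rewrite E subsetDl.
Qed.
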